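(* Let $A\in\{0,1\}^{N\times n}$ and let $U_1,\dots,U_N,V_1,\dots,V_n\in\mathbb{R}^d$ be a margin-$m$, relative-bias-$0$ embedding of $A$. Define the linear map $V:\mathbb{R}^n\to\mathbb{R}^d$ by $Ve_i=V_i$. Suppose $S\subseteq[n]$ is shattered by the family of row supports $\mathcal{C}_A=\{\{i\in[n]:A_{ji}=1\}: j\in[N]\}$. Then every $x\in\mathbb{R}^n$ supported on $S$ satisfies $\|Vx\|_2\ge m\|x\|_1$.
   Context: For $A\in\{0,1\}^{N\times n}$ and $m\ge0$, unit vectors $U_1,\dots,U_N,V_1,\dots,V_n\in\mathbb{R}^d$ form a margin-$m$, relative-bias-$0$ embedding of $A$ if $\langle U_j,V_i\rangle\ge m$ whenever $A_{ji}=1$ and $\langle U_j,V_i\rangle\le -m$ whenever $A_{ji}=0$. A set $B\subseteq[n]$ is shattered by a family $\mathcal{S}$ of subsets of $[n]$ if for every $C\subseteq B$ there is $S'\in\mathcal{S}$ with $S'\cap B=C$. *)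

(* Defs.v *)
From mathcomp Require Import all_boot all_order all_algebra.
From mathcomp Require Import reals.
Set Implicit Arguments. Unset Strict Implicit. Unset Printing Implicit Defensive.
Import Order.TTheory GRing.Theory Num.Theory.
Local Open Scope ring_scope.

Definition dotv (R : realType) (d : nat) (u v : 'rV[R]_d) : R :=
  \sum_(k < d) u ord0 k * v ord0 k.

Definition norm2 (R : realType) (d : nat) (u : 'rV[R]_d) : R :=
  Num.sqrt (dotv u u).

Definition norm1 (R : realType) (n : nat) (x : 'rV[R]_n) : R :=
  \sum_(i < n) `|x ord0 i|.

Definition unit_vec (R : realType) (d : nat) (u : 'rV[R]_d) : Prop :=
  norm2 u = 1.

Definition margin_embedding (R : realType) (N n d : nat)
  (A : 'I_N -> 'I_n -> bool) (m : R)
  (U : 'I_N -> 'rV[R]_d) (V : 'I_n -> 'rV[R]_d) : Prop :=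
  (forall j, unit_vec (U j)) /\ (forall i, unit_vec (V i)) /\
  (forall j i, A j i -> m <= dotv (U j) (V i)) /\
  (forall j i, ~~ A j i -> dotv (U j) (V i) <= - m).

Definition row_support (N n : nat) (A : 'I_N -> 'I_n -> bool) (j : 'I_N)
  : {set 'I_n} := [set i | A j i].

Definition shattered (n : nat) (F : {set 'I_n} -> Prop) (B : {set 'I_n}) : Prop :=
  forall C : {set 'I_n}, C \subset B ->
    exists S' : {set 'I_n}, F S' /\ S' :&: B = C.

Definition linmap (R : realType) (n d : nat) (V : 'I_n -> 'rV[R]_d)
  (x : 'rV[R]_n) : 'rV[R]_d :=
  \sum_(i < n) x ord0 i *: V i.

(* Main.v *)
Require Import Defs.
From mathcomp Require Import all_boot all_order all_algebra.
From mathcomp Require Import reals.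
From mathcomp Require Import ring lra.
Import Order.TTheory GRing.Theory Num.Theory.
Local Open Scope ring_scope.

Lemma dotv_lin (R : realType) (n d : nat) (V : 'I_n -> 'rV[R]_d) (u : 'rV[R]_d)
  (x : 'rV[R]_n) :
  dotv u (linmap V x) = \sum_(i < n) x ord0 i * dotv u (V i).
Proof.
rewrite /dotv /linmap.
under eq_bigr => k _ do rewrite summxE mulr_sumr.
rewrite exchange_big /=; apply: eq_bigr => i _.
rewrite mulr_sumr; apply: eq_bigr => k _; rewrite mxE; ring.
Qed.

Lemma cs_unit (R : realType) (d : nat) (u w : 'rV[R]_d) :
  unit_vec u -> dotv u w <= norm2 w.
Proof.
rewrite /unit_vec /norm2 => hu.
have h0 : 0 <= dotv u u by apply: sumr_ge0 => k _; by rewrite -expr2 sqr_ge0.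
have huu : dotv u u = 1 by rewrite -(sqr_sqrtr h0) hu expr1n.
have key (t : R) : \sum_(k < d) (w ord0 k - t * u ord0 k) ^+ 2 =
   \sum_(k < d) (w ord0 k * w ord0 k) + (- (2 * t)) * \sum_(k < d) (u ord0 k * w ord0 k)
   + t ^+ 2 * \sum_(k < d) (u ord0 k * u ord0 k).
  rewrite !mulr_sumr -!big_split /=; apply: eq_bigr => k _; ring.
set t := dotv u w.
have hge : 0 <= \sum_(k < d) (w ord0 k - t * u ord0 k) ^+ 2.
  by apply: sumr_ge0 => k _; exact: sqr_ge0.
rewrite key in hge.
have hge2 : 0 <= dotv w w + - (2 * t) * t + t ^+ 2 * dotv u u := hge.
rewrite huu in hge2.
have ht2 : t ^+ 2 <= dotv w w by lra.
apply: (le_trans (ler_norm t)).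
rewrite -sqrtr_sqr; exact: ler_wsqrtr.
Qed.

Theorem lemmaF1 (R : realType) (N n d : nat) (A : 'I_N -> 'I_n -> bool)
  (m : R) (U : 'I_N -> 'rV[R]_d) (V : 'I_n -> 'rV[R]_d) (S : {set 'I_n}) :
  0 <= m ->
  margin_embedding A m U V ->
  shattered (fun S' => exists j : 'I_N, S' = row_support A j) S ->
  forall x : 'rV[R]_n, (forall i, i \notin S -> x ord0 i = 0) ->
    m * norm1 x <= norm2 (linmap V x).
Proof.
move=> m0 [hU [hV [hpos hneg]]] hsh x hx.
have hsub : [set i in S | 0 < x ord0 i] \subset S.
  by apply/subsetP => i; rewrite inE => /andP[].
have [S' [[j ->] hj]] := hsh _ hsub.
have hc := @cs_unit _ _ _ (linmap V x) (hU j).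
apply: (le_trans _ hc).
rewrite dotv_lin /norm1 mulr_sumr; apply: ler_sum => i _.
case: (boolP (i \in S)) => iS; last by rewrite hx // normr0 mul0r mulr0.
have hmem : (i \in row_support A j :&: S) = (0 < x ord0 i).
  by rewrite hj !inE iS.
rewrite inE iS andbT /row_support inE in hmem.
case: (ltrP 0 (x ord0 i)) => hxi.
- have := hpos j i; rewrite hmem => /(_ hxi) h.
  rewrite gtr0_norm //; nra.
- have h : dotv (U j) (V i) <= - m.
    by apply: hneg; rewrite hmem -leNgt.
  rewrite ler0_norm //; nra.
Qed.
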